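(* Let $k$ be an algebraically closed field of characteristic zero, let $A$ be a cosemisimple Hopf algebra over $k$ with Haar measure $h$ and antipode $S$, and let $V$ be a finite-dimensional irreducible (simple) $A$-comodule. Then: (1) If $V$ is not self-dual (i.e. $V$ is not isomorphic to its dual comodule $V^*$), then $\nu_2(V) = 0$. (2) Suppose $V$ is self-dual, let $\beta : V \otimes V \to k$ be a non-degenerate $A$-colinear bilinear form, and let $E$ be the matrix of $\beta$ in some basis of $V$. Then $$\nu_2(V) = \frac{\dim(V)}{\mathrm{tr}(E\,({}^t\!E)^{-1})}.$$ (3) Suppose $V$ is self-dual and $S^2 = \mathrm{id}$. Then $\nu_2(V) = \pm 1$; moreover $\nu_2(V) = 1$ corresponds to the existence of an $A$-colinear symmetric non-degenerate bilinear form on $V$, and $\nu_2(V) = -1$ corresponds to the existence of an $A$-colinear skew-symmetric non-degenerate bilinear form on $V$.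
   Context: A Hopf algebra $A$ is cosemisimple if every $A$-comodule is a direct sum of simple comodules; such an $A$ has a unique Haar measure, i.e. a linear form $h : A \to k$ with $h(1)=1$ and $(\mathrm{id}\otimes h)\Delta = h(\cdot)1 = (h \otimes \mathrm{id})\Delta$. For a finite-dimensional right $A$-comodule $V$ with basis $e_1,\dots,e_n$ and coaction $e_j \mapsto \sum_i e_i \otimes a_{ij}$, the elements $a_{ij}\in A$ are the matrix coefficients; the character of $V$ is $\chi_V = \sum_i a_{ii}$ (the image of $\mathrm{id}_V$ under the coalgebra map $V^*\otimes V \to A$). The Schur indicator of $V$ is $\nu_2(V) := h(\chi_{V(1)}\chi_{V(2)})$, where $\Delta(\chi_V) = \chi_{V(1)}\otimes\chi_{V(2)}$ in Sweedler notation; equivalently $\nu_2(V) = \sum_{i,j} h(a_{ji}a_{ij})$. A bilinear form $\beta: V\otimes V \to k$ is $A$-colinear if it is a morphism of $A$-comodules, where $V\otimes V$ carries the tensor product coaction and $k$ the trivial coaction $1\mapsto 1\otimes 1$. *)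

(* Defs.v *)
(* Hopf algebras over a field, encoded honestly:
   - A is a k-algebra (algType k);
   - an element of A (x) A is represented by a finite formal sum
     [seq (x_i, y_i)] meaning  sum_i x_i (x) y_i ; two such formal sums denote
     the same tensor iff all pairings with (f (x) g), f g linear forms on A,
     agree (linear forms f (x) g separate the points of A (x) A over a field).
   - the comultiplication is a map Delta : A -> seq (A * A). *)
From HB Require Import structures.
From mathcomp Require Import all_boot all_order all_algebra.
Set Implicit Arguments. Unset Strict Implicit. Unset Printing Implicit Defensive.
Import GRing.Theory.
Local Open Scope ring_scope.

Section HopfDefs.
Variable k : fieldType.
Variable A : algType k.

Definition lin_form (f : A -> k) : Prop :=
  forall (c : k) (x y : A), f (c *: x + y) = c * f x + f y.

Definition lin_endo (S : A -> A) : Prop :=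
  forall (c : k) (x y : A), S (c *: x + y) = c *: S x + S y.

Definition pair2 (f g : A -> k) (t : seq (A * A)) : k :=
  \sum_(p <- t) f p.1 * g p.2.

Definition is_hopf (D : A -> seq (A * A)) (eps : A -> k) (S : A -> A) : Prop :=
  [/\
    forall f g, lin_form f -> lin_form g -> forall c x y,
      pair2 f g (D (c *: x + y)) = c * pair2 f g (D x) + pair2 f g (D y),
  (* coassociativity: (Delta (x) id) Delta = (id (x) Delta) Delta *)
    forall f g l, lin_form f -> lin_form g -> lin_form l -> forall x,
      \sum_(p <- D x) pair2 f g (D p.1) * l p.2
      = \sum_(p <- D x) f p.1 * pair2 g l (D p.2),
    forall f g, lin_form f -> lin_form g ->
      (forall x y, pair2 f g (D (x * y)) =
         \sum_(p <- D x) \sum_(q <- D y) f (p.1 * q.1) * g (p.2 * q.2))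
      /\ pair2 f g (D 1) = f 1 * g 1,
    [/\ lin_form eps, eps 1 = 1, (forall x y, eps (x * y) = eps x * eps y) &
        forall x, \sum_(p <- D x) eps p.1 *: p.2 = x
               /\ \sum_(p <- D x) eps p.2 *: p.1 = x] &
    lin_endo S /\
    forall x, \sum_(p <- D x) S p.1 * p.2 = (eps x)%:A
           /\ \sum_(p <- D x) p.1 * S p.2 = (eps x)%:A].

(* matrix coefficients of a right comodule structure on k^n with basis
   e_1..e_n and coaction e_j |-> sum_i e_i (x) a_ij :
   Delta(a_ij) = sum_l a_il (x) a_lj  and eps(a_ij) = delta_ij *)
Definition comatrix (D : A -> seq (A * A)) (eps : A -> k) n (a : 'M[A]_n) : Prop :=
  (forall f g, lin_form f -> lin_form g -> forall i j,
     pair2 f g (D (a i j)) = \sum_l f (a i l) * g (a l j))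
  /\ (forall i j, eps (a i j) = (i == j)%:R).

(* the subspace of k^n spanned by the rows of U (row coordinate vectors)
   is a subcomodule: rho(U) is contained in U (x) A, i.e. U is stable under
   (id (x) f) rho for every linear form f *)
Definition subcomod n (a : 'M[A]_n) (U : 'M[k]_n) : Prop :=
  forall f : A -> k, lin_form f -> stablemx U (map_mx f a)^T.

Definition simple_comod n (a : 'M[A]_n) : Prop :=
  (0 < n)%N /\
  forall U : 'M[k]_n, subcomod a U -> (U == (0 : 'M[k]_n))%MS || (U == 1%:M)%MS.

Definition cosemisimple (D : A -> seq (A * A)) (eps : A -> k) : Prop :=
  forall n (a : 'M[A]_n), comatrix D eps a ->
  forall U : 'M[k]_n, subcomod a U ->
  exists W : 'M[k]_n, subcomod a W /\ (U + W == 1%:M)%MS /\ (U :&: W == (0 : 'M[k]_n))%MS.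

Definition haar (D : A -> seq (A * A)) (h : A -> k) : Prop :=
  [/\ lin_form h, h 1 = 1 &
      forall x, \sum_(p <- D x) h p.2 *: p.1 = (h x)%:A
             /\ \sum_(p <- D x) h p.1 *: p.2 = (h x)%:A].

Definition scal_mx n m (E : 'M[k]_(n, m)) : 'M[A]_(n, m) := map_mx (fun c => c%:A) E.

(* dual comodule V^*: matrix coefficients S(a_ji) in the dual basis *)
Definition dual_comatrix (S : A -> A) n (a : 'M[A]_n) : 'M[A]_n :=
  \matrix_(i, j) S (a j i).

Definition comod_iso n (a b : 'M[A]_n) : Prop :=
  exists F : 'M[k]_n, F \in unitmx /\ b *m scal_mx F = scal_mx F *m a.

Definition self_dual (S : A -> A) n (a : 'M[A]_n) : Prop :=
  comod_iso a (dual_comatrix S a).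

(* the bilinear form with matrix E (beta(e_i,e_j) = E_ij) is A-colinear:
   sum_{k,l} E_kl a_ki a_lj = E_ij 1 *)
Definition colinear_form n (a : 'M[A]_n) (E : 'M[k]_n) : Prop :=
  a^T *m scal_mx E *m a = scal_mx E.

Definition nu2 (h : A -> k) n (a : 'M[A]_n) : k :=
  \sum_(i < n) \sum_(j < n) h (a j i * a i j).

End HopfDefs.

(* Main.v *)
Require Import Defs.
From HB Require Import structures.
From mathcomp Require Import all_boot all_order all_algebra.
From mathcomp Require Import boolp classical_sets.
Import GRing.Theory.
Local Open Scope ring_scope.
Set Implicit Arguments. Unset Strict Implicit. Unset Printing Implicit Defensive.
Local Open Scope classical_set_scope.

Section Sep.
Variables (k : fieldType) (V : lmodType k).

Definition closedG (G : set (V * k)) :=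
  forall c u a v b, G (u, a) -> G (v, b) -> G (c *: u + v, c * a + b).
Definition funcG (G : set (V * k)) := forall u a b, G (u, a) -> G (u, b) -> a = b.

Lemma sep_exists (x : V) : x != 0 ->
  exists f : V -> k, (forall c u v, f (c *: u + v) = c * f u + f v) /\ f x = 1.
Proof.
move=> x0.
pose P (G : set (V * k)) := [/\ closedG G, funcG G & (G !=set0 -> G (x, 1))].
have [M [[cM fM xM] maxM]] : exists A, P A /\ forall B, A `<` B -> ~ P B.
  apply: Zorn_bigcup => F FP Ftot; split.
  - move=> c u a v b [X FX Xu] [Y FY Yv].
    have [XY|YX] := Ftot X Y FX FY.
    + exists Y => //; have [cY _ _] := FP Y FY; exact: cY (XY _ Xu) Yv.
    + exists X => //; have [cX _ _] := FP X FX; exact: cX Xu (YX _ Yv).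
  - move=> u a b [X FX Xu] [Y FY Yv].
    have [XY|YX] := Ftot X Y FX FY.
    + have [_ fY _] := FP Y FY; exact: fY (XY _ Xu) Yv.
    + have [_ fX _] := FP X FX; exact: fX Xu (YX _ Yv).
  - move=> [[u a] [X FX Xu]]; exists X => //.
    have [_ _ xX] := FP X FX; apply: xX; by exists (u, a).
have Mne : M !=set0.
  case: (pselect (M !=set0)) => // Me.
  exfalso; pose L : set (V * k) := fun p => p.1 = p.2 *: x.
  apply: (maxM L).
    split.
      move=> [u a] Mu; exfalso; apply: Me; by exists (u, a).
    move=> /(_ (x, 1)) LM; apply: Me; exists (x, 1); apply: LM.
    by rewrite /L /= scale1r.
  split.
  - move=> c u a v b; rewrite /L /= => -> ->; by rewrite scalerDl scalerA.
  - move=> u a b; rewrite /L /= => -> /eqP; rewrite -subr_eq0 -scalerBl.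
    rewrite scaler_eq0 (negPf x0) orbF subr_eq0 => /eqP //.
  - move=> _; by rewrite /L /= scale1r.
have Mx := xM Mne.
have M0 : M (0, 0).
  have := cM (-1) x 1 x 1 Mx Mx.
  by rewrite scaleN1r addNr mulN1r addNr.
have Mtot : forall y, exists a, M (y, a).
  move=> y; case: (pselect (exists a, M (y, a))) => // ny.
  have nyM : forall a, ~ M (y, a) by move=> a Ma; apply: ny; exists a.
  exfalso; pose M' : set (V * k) := fun p => exists c u, M (u, p.2) /\ p.1 = u + c *: y.
  apply: (maxM M').
    split.
      move=> [u a] Mu; exists 0, u; split => //=; by rewrite scale0r addr0.
    move=> /(_ (y, 0)) LM; apply: (nyM 0); apply: LM.
    exists 1, 0; split => //=; by rewrite scale1r add0r.
  split.
  - move=> c u a v b [c1 [u1 [Mu1 /= ->]]] [c2 [v1 [Mv1 /= ->]]].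
    exists (c * c1 + c2), (c *: u1 + v1); split; first exact: cM.
    rewrite /= scalerDr scalerA addrACA scalerDl //.
  - move=> u a b [c1 [u1 [Mu1 /= ->]]] [c2 [v1 [Mv1 /= E]]].
    have [ceq|cne] := eqVneq c1 c2.
      move: E; rewrite ceq => /addIr E; rewrite E in Mu1; exact: fM Mu1 Mv1.
    exfalso; apply: (nyM ((c1 - c2)^-1 * (b - a))).
    have E2 : y = (c1 - c2)^-1 *: (v1 - u1).
      apply: (@scalerI _ _ (c1 - c2)); first by rewrite subr_eq0.
      rewrite scalerA mulfV ?subr_eq0 // scale1r scalerBl.
      by apply: (addrI u1); rewrite addrA E addrK addrCA subrr addr0.
    rewrite {1}E2.
    have := cM (-1) u1 a v1 b Mu1 Mv1.
    rewrite scaleN1r mulN1r => Mvu.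
    have := cM ((c1 - c2)^-1) _ _ _ _ Mvu M0.
    by rewrite !addr0 (addrC (-u1)) (addrC (-a)).
  - move=> _; exists 0, x; split => //=; by rewrite scale0r addr0.
have [f Hf] := choice Mtot.
exists f; split; last exact: fM (Hf x) Mx.
move=> c u v; apply: fM (Hf _) _; exact: cM (Hf u) (Hf v).
Qed.
End Sep.

Local Close Scope classical_set_scope.


Section Transfer.
Variables (k : fieldType) (A : algType k).

Lemma lf0 (f : A -> k) : lin_form f -> f 0 = 0.
Proof. move=> lf; have := lf 1 0 0; rewrite scale1r addr0 mul1r => E.
by apply: (@addrI _ (f 0)); rewrite addr0 -E. Qed.
Lemma lfD (f : A -> k) : lin_form f -> forall x y, f (x + y) = f x + f y.
Proof. by move=> lf x y; have := lf 1 x y; rewrite scale1r mul1r. Qed.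
Lemma lfZ (f : A -> k) : lin_form f -> forall c x, f (c *: x) = c * f x.
Proof. by move=> lf c x; rewrite -(addr0 (c *: x)) lf lf0 // addr0. Qed.
Lemma lfN (f : A -> k) : lin_form f -> forall x, f (- x) = - f x.
Proof. by move=> lf x; rewrite -scaleN1r lfZ // mulN1r. Qed.
Lemma lf_sum (f : A -> k) (I : Type) (r : seq I) (F : I -> A) : lin_form f ->
  f (\sum_(i <- r) F i) = \sum_(i <- r) f (F i).
Proof. move=> lf; elim: r => [|i r IH]; first by rewrite !big_nil lf0.
by rewrite !big_cons lfD // IH. Qed.

Lemma sepA (x : A) : x != 0 -> exists f, lin_form f /\ f x = 1.
Proof. move=> /sep_exists [f [lf fx]]; by exists f. Qed.

Lemma sepA0 (x : A) : (forall f, lin_form f -> f x = 0) -> x = 0.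
Proof. move=> H; apply/eqP; apply/negP => /negP /sepA [f [lf fx]].
by move: (H f lf); rewrite fx => /eqP; rewrite oner_eq0. Qed.

Definition bilin (B : A -> A -> A) :=
  (forall c x y z, B (c *: x + y) z = c *: B x z + B y z) /\
  (forall c x y z, B x (c *: y + z) = c *: B x y + B x z).

Lemma bilin0l B : bilin B -> forall z, B 0 z = 0.
Proof. move=> [Bl _] z; have := Bl 1 0 0 z; rewrite scale1r addr0 scale1r => E.
by apply: (@addrI _ (B 0 z)); rewrite addr0 -E. Qed.
Lemma bilin0r B : bilin B -> forall z, B z 0 = 0.
Proof. move=> [_ Br] z; have := Br 1 z 0 0; rewrite scale1r addr0 scale1r => E.
by apply: (@addrI _ (B z 0)); rewrite addr0 -E. Qed.
Lemma bilinZl B : bilin B -> forall c x z, B (c *: x) z = c *: B x z.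
Proof. by move=> bB c x z; rewrite -(addr0 (c *: x)) (proj1 bB) bilin0l // addr0. Qed.
Lemma bilinZr B : bilin B -> forall c x z, B z (c *: x) = c *: B z x.
Proof. by move=> bB c x z; rewrite -(addr0 (c *: x)) (proj2 bB) bilin0r // addr0. Qed.
Lemma bilinDl B : bilin B -> forall x y z, B (x + y) z = B x z + B y z.
Proof. by move=> bB x y z; have := (proj1 bB) 1 x y z; rewrite !scale1r. Qed.
Lemma bilinDr B : bilin B -> forall x y z, B z (x + y) = B z x + B z y.
Proof. by move=> bB x y z; have := (proj2 bB) 1 z x y; rewrite !scale1r. Qed.
Lemma bilinNl B : bilin B -> forall x z, B (- x) z = - B x z.
Proof. by move=> bB x z; rewrite -scaleN1r bilinZl // scaleN1r. Qed.

Lemma split_sum B (g : A -> k) (y1 : A) (r : seq (A * A)) : bilin B ->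
  \sum_(p <- r) B p.1 p.2 =
  B (\sum_(p <- r) g p.2 *: p.1) y1 +
  \sum_(p <- map (fun p => (p.1, p.2 - g p.2 *: y1)) r) B p.1 p.2.
Proof.
move=> bB; elim: r => [|p r IH]; first by rewrite !big_nil bilin0l // addr0.
rewrite /= !big_cons IH /= bilinDl // bilinZl //.
have -> : B p.1 p.2 = g p.2 *: B p.1 y1 + B p.1 (p.2 - g p.2 *: y1).
  by rewrite -bilinZr // -bilinDr // addrC subrK.
rewrite !addrA; congr (_ + _); rewrite addrAC; done.
Qed.

Definition tensB (f g : A -> k) : A -> A -> A := fun u v => (f u * g v)%:A.
Lemma tensB_bilin f g : lin_form f -> lin_form g -> bilin (tensB f g).
Proof.
move=> lf lg; split=> c x y z; rewrite /tensB.
  by rewrite lf mulrDl -mulrA scalerDl -(scalerA c).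
by rewrite lg mulrDr mulrCA scalerDl -(scalerA c).
Qed.
Lemma pair2E f g (t : seq (A * A)) :
  (pair2 f g t)%:A = \sum_(p <- t) tensB f g p.1 p.2.
Proof. by rewrite /pair2 /tensB; elim: t => [|p t IH]; rewrite ?big_nil ?big_cons ?scale0r // scalerDl IH. Qed.

Lemma inalg_inj (c d : k) : c%:A = d%:A :> A -> c = d.
Proof. move=> /eqP; rewrite -subr_eq0 -scalerBl scaler_eq0 oner_eq0 orbF subr_eq0.
by move=> /eqP. Qed.

Lemma transfer0 m (w : seq (A * A)) : (size w <= m)%N ->
  (forall f g, lin_form f -> lin_form g -> pair2 f g w = 0) ->
  forall B, bilin B -> \sum_(p <- w) B p.1 p.2 = 0.
Proof.
elim: m w => [|m IH] [|[x1 y1] r] //= sr Hw B bB; rewrite ?big_nil //.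
rewrite big_cons /=.
have [y10|y0] := eqVneq y1 0.
  rewrite y10 bilin0r // add0r; apply: IH => // f g lf lg.
  by have := Hw f g lf lg; rewrite /pair2 big_cons /= y10 (lf0 lg) mulr0 add0r.
have [g [lg gy]] := sepA y0.
pose r' := map (fun p => (p.1, p.2 - g p.2 *: y1)) r.
have X0 : x1 + \sum_(p <- r) g p.2 *: p.1 = 0.
  apply: sepA0 => f lf.
  rewrite lfD // lf_sum // -[RHS](Hw f g lf lg) /pair2 big_cons /= gy mulr1.
  by congr (_ + _); apply: eq_bigr => p _; rewrite lfZ // mulrC.
have key : forall Φ, bilin Φ -> \sum_(p <- (x1, y1) :: r) Φ p.1 p.2 =
    \sum_(p <- r') Φ p.1 p.2.
  move=> Φ bΦ; rewrite big_cons /= (split_sum g y1 r bΦ) addrA -bilinDl // X0.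
  by rewrite bilin0l // add0r.
have := key B bB; rewrite big_cons /= => ->.
apply: IH; first by rewrite size_map.
move=> f g' lf lg'; apply: inalg_inj; rewrite pair2E -key ?tensB_bilin //.
  by rewrite -pair2E Hw // scale0r.
  exact: tensB_bilin.
exact: bB.
Qed.

Lemma transfer (t t' : seq (A * A)) :
  (forall f g, lin_form f -> lin_form g -> pair2 f g t = pair2 f g t') ->
  forall B, bilin B -> \sum_(p <- t) B p.1 p.2 = \sum_(p <- t') B p.1 p.2.
Proof.
move=> H B bB; apply/eqP; rewrite -subr_eq0; apply/eqP.
pose w := t ++ map (fun p => (- p.1, p.2)) t'.
have E : forall Φ, bilin Φ -> \sum_(p <- w) Φ p.1 p.2 =
   \sum_(p <- t) Φ p.1 p.2 - \sum_(p <- t') Φ p.1 p.2.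
  move=> Φ bΦ; rewrite big_cat big_map /=; congr (_ + _).
  rewrite -sumrN; apply: eq_bigr => p _; exact: bilinNl.
rewrite -E //; apply: (transfer0 (leqnn _)) => // f g lf lg.
apply: inalg_inj; rewrite pair2E E; last exact: tensB_bilin.
by rewrite -!pair2E H // subrr scale0r.
Qed.

End Transfer.


Section Hopf1.
Variables (k : fieldType) (A : algType k).
Variables (D : A -> seq (A * A)) (eps : A -> k) (S : A -> A) (h : A -> k).
Hypothesis HH : is_hopf D eps S.
Hypothesis Hh : haar D h.

Lemma lf_mull (f : A -> k) (x : A) : lin_form f -> lin_form (fun u => f (x * u)).
Proof. by move=> lf c u v; rewrite mulrDr -scalerAr lf. Qed.
Lemma lf_mulr (f : A -> k) (x : A) : lin_form f -> lin_form (fun u => f (u * x)).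
Proof. by move=> lf c u v; rewrite mulrDl -scalerAl lf. Qed.

Lemma bilin_mul B (x y : A) : bilin B -> bilin (fun u v => B (x * u) (y * v)).
Proof. by move=> bB; split=> c u v w /=; rewrite ?mulrDr -?scalerAr ?(proj1 bB) ?(proj2 bB). Qed.
Lemma bilin_mulr B (x y : A) : bilin B -> bilin (fun u v => B (u * x) (v * y)).
Proof. by move=> bB; split=> c u v w /=; rewrite ?mulrDl -?scalerAl ?(proj1 bB) ?(proj2 bB). Qed.

Lemma DM B (x y : A) : bilin B ->
  \sum_(p <- D (x * y)) B p.1 p.2 =
  \sum_(p <- D x) \sum_(q <- D y) B (p.1 * q.1) (p.2 * q.2).
Proof.
move=> bB; case: HH => _ _ Hm _ _.
rewrite (@transfer _ _ (D (x * y)) [seq (p.1 * q.1, p.2 * q.2) | p <- D x, q <- D y]) //.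
  by rewrite big_allpairs_dep.
move=> f g lf lg; rewrite (proj1 (Hm f g lf lg)) /pair2 big_allpairs_dep //.
Qed.

Lemma D1 B : bilin B -> \sum_(p <- D 1) B p.1 p.2 = B 1 1.
Proof.
move=> bB; case: HH => _ _ Hm _ _.
rewrite (@transfer _ _ (D 1) [:: (1, 1)]) ?big_seq1 // => f g lf lg.
by rewrite (proj2 (Hm f g lf lg)) /pair2 big_seq1.
Qed.

Section Comat.
Variables (n : nat) (a : 'M[A]_n).
Hypothesis Ha : comatrix D eps a.

Lemma T1 B i j : bilin B ->
  \sum_(p <- D (a i j)) B p.1 p.2 = \sum_l B (a i l) (a l j).
Proof.
move=> bB; rewrite (@transfer _ _ _ [seq (a i l, a l j) | l <- index_enum 'I_n]) ?big_map //.
by move=> f g lf lg; rewrite (proj1 Ha f g lf lg) /pair2 big_map.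
Qed.

Lemma T2 B i j m l : bilin B ->
  \sum_(p <- D (a i j * a m l)) B p.1 p.2 =
  \sum_r \sum_s B (a i r * a m s) (a r j * a s l).
Proof.
move=> bB; rewrite DM //.
transitivity (\sum_(p <- D (a i j)) \sum_s B (p.1 * a m s) (p.2 * a s l)).
  by apply: eq_bigr => p _; exact: (T1 _ _ (bilin_mul p.1 p.2 bB)).
rewrite exchange_big /= [RHS]exchange_big; apply: eq_bigr => s _ /=.
exact: (T1 _ _ (bilin_mulr (a m s) (a s l) bB)).
Qed.

Lemma bilin_Sl : bilin (fun u v => S u * v).
Proof.
case: HH => _ _ _ _ [lS _]; split=> c x y z /=.
  by rewrite lS mulrDl scalerAl.
by rewrite mulrDr scalerAr.
Qed.

Lemma antipode_l i j : \sum_l S (a i l) * a l j = (i == j)%:R%:A.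
Proof.
have := T1 i j bilin_Sl.
case: HH => _ _ _ [_ _ _ _] [_ Hant].
rewrite (proj1 (Hant (a i j))) (proj2 Ha) => <- //.
Qed.

Lemma bilin_h : bilin (fun u v => h v *: u).
Proof.
case: Hh => lh _ _; split=> c x y z /=.
  by rewrite scalerDr scalerA mulrC -scalerA.
by rewrite lh scalerDl scalerA.
Qed.

Lemma haar_inv i j m l :
  \sum_r \sum_s h (a r i * a s j) *: (a m r * a l s) = (h (a m i * a l j))%:A.
Proof.
rewrite -(T2 _ _ _ _ bilin_h).
by case: Hh => _ _ /(_ (a m i * a l j)) [-> _].
Qed.

End Comat.
End Hopf1.


Section Mat.
Variables (k : fieldType) (A : algType k).

Lemma scal_mxE m p (X : 'M[k]_(m, p)) : scal_mx A X = map_mx (in_alg A) X.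
Proof. by []. Qed.

Lemma scal_mxM m p q (X : 'M[k]_(m, p)) (Y : 'M[k]_(p, q)) :
  scal_mx A (X *m Y) = scal_mx A X *m scal_mx A Y.
Proof. by rewrite !scal_mxE map_mxM. Qed.

Lemma scal_mx1 p : scal_mx A (1%:M : 'M[k]_p) = 1%:M.
Proof. by rewrite scal_mxE map_scalar_mx rmorph1. Qed.

Lemma scal_mx_tr m p (X : 'M[k]_(m, p)) : (scal_mx A X)^T = scal_mx A X^T.
Proof. by rewrite !scal_mxE map_trmx. Qed.

Lemma tr_mulscal_r m p q (X : 'M[A]_(m, p)) (G : 'M[k]_(p, q)) :
  (X *m scal_mx A G)^T = scal_mx A G^T *m X^T.
Proof.
apply/matrixP => i j; rewrite !mxE; apply: eq_bigr => l _.
by rewrite !mxE mulr_algr mulr_algl.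
Qed.

Lemma tr_mulscal_l m p q (X : 'M[A]_(p, q)) (G : 'M[k]_(m, p)) :
  (scal_mx A G *m X)^T = X^T *m scal_mx A G^T.
Proof.
apply/matrixP => i j; rewrite !mxE; apply: eq_bigr => l _.
by rewrite !mxE mulr_algr mulr_algl.
Qed.

Lemma map_lin_r (f : A -> k) m p q (X : 'M[A]_(m, p)) (G : 'M[k]_(p, q)) :
  lin_form f -> map_mx f (X *m scal_mx A G) = map_mx f X *m G.
Proof.
move=> lf; apply/matrixP => i j; rewrite !mxE lf_sum //; apply: eq_bigr => l _.
by rewrite !mxE mulr_algr lfZ // mulrC.
Qed.

Lemma map_lin_l (f : A -> k) m p q (X : 'M[A]_(p, q)) (G : 'M[k]_(m, p)) :
  lin_form f -> map_mx f (scal_mx A G *m X) = G *m map_mx f X.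
Proof.
move=> lf; apply/matrixP => i j; rewrite !mxE lf_sum //; apply: eq_bigr => l _.
by rewrite !mxE mulr_algl lfZ //.
Qed.

Lemma map_endo_r (T : A -> A) m p q (X : 'M[A]_(m, p)) (G : 'M[k]_(p, q)) :
  lin_endo T -> map_mx T (X *m scal_mx A G) = map_mx T X *m scal_mx A G.
Proof.
move=> lT.
have T0 : T 0 = 0.
  have := lT 1 0 0; rewrite scale1r addr0 scale1r => E.
  by apply: (@addrI _ (T 0)); rewrite addr0 -E.
have TD : forall x y, T (x + y) = T x + T y.
  by move=> x y; have := lT 1 x y; rewrite !scale1r.
have TZ : forall c x, T (c *: x) = c *: T x.
  by move=> c x; have := lT c x 0; rewrite !addr0 T0 addr0.
apply/matrixP => i j; rewrite !mxE.
rewrite (big_morph T TD T0); apply: eq_bigr => l _.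
by rewrite !mxE !mulr_algr TZ.
Qed.

Lemma map_endo_l (T : A -> A) m p q (X : 'M[A]_(p, q)) (G : 'M[k]_(m, p)) :
  lin_endo T -> map_mx T (scal_mx A G *m X) = scal_mx A G *m map_mx T X.
Proof.
move=> lT.
have T0 : T 0 = 0.
  have := lT 1 0 0; rewrite scale1r addr0 scale1r => E.
  by apply: (@addrI _ (T 0)); rewrite addr0 -E.
have TD : forall x y, T (x + y) = T x + T y.
  by move=> x y; have := lT 1 x y; rewrite !scale1r.
have TZ : forall c x, T (c *: x) = c *: T x.
  by move=> c x; have := lT c x 0; rewrite !addr0 T0 addr0.
apply/matrixP => i j; rewrite !mxE.
rewrite (big_morph T TD T0); apply: eq_bigr => l _.
by rewrite !mxE !mulr_algl TZ.
Qed.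

End Mat.

Section Schur.
Variables (k : closedFieldType) (A : algType k).

Lemma inv_morph n (a : 'M[A]_n) (G : 'M[k]_n) (bf : (A -> k) -> 'M[k]_n) :
  simple_comod a -> G != 0 ->
  (forall f, lin_form f -> map_mx f a *m G = G *m bf f) -> G \in unitmx.
Proof.
move=> [n0 Hs] G0 HG.
have : subcomod a G^T.
  move=> f lf; rewrite -trmx_mul HG // trmx_mul; exact: submxMl.
move=> /Hs /orP [/eqmx0P G0'|/andP [_]].
  by move: G0; rewrite -[G]trmxK G0' trmx0 eqxx.
by rewrite -unitmx_tr -row_full_unit -sub1mx.
Qed.

Lemma schur n (a : 'M[A]_n) (X : 'M[k]_n) :
  simple_comod a ->
  (forall f, lin_form f -> map_mx f a *m X = X *m map_mx f a) -> exists c, X = c%:M.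
Proof.
move=> [n0 Hs] HX.
have [c rc] : exists c, root (char_poly X) c.
  by apply/closed_rootP; rewrite size_char_poly; case: n n0 {a Hs HX X} => //.
exists c; set Y := X - c%:M.
have HY : forall f, lin_form f -> map_mx f a *m Y = Y *m map_mx f a.
  by move=> f lf; rewrite mulmxBr mulmxBl HX // scalar_mxC.
have nuY : Y \notin unitmx.
  by rewrite -row_free_unit -kermx_eq0; rewrite -eigenvalue_root_char in rc.
have : subcomod a (kermx Y^T).
  move=> f lf; apply/sub_kermxP.
  by rewrite -mulmxA -trmx_mul -HY // trmx_mul mulmxA mulmx_ker mul0mx.
move=> /Hs /orP [/eqmx0P K0|/andP [_]].
  by move: nuY; rewrite -unitmx_tr -row_free_unit -kermx_eq0 K0 eqxx.
move=> /sub_kermxP; rewrite mul1mx => /(congr1 trmx); rewrite trmxK trmx0.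
by move=> /eqP; rewrite subr_eq0 => /eqP.
Qed.

End Schur.


Section Main.
Variables (k : closedFieldType) (A : algType k).
Variables (D : A -> seq (A * A)) (eps : A -> k) (S : A -> A) (h : A -> k).
Hypothesis HH : is_hopf D eps S.
Hypothesis Hh : haar D h.
Variables (n : nat) (a : 'M[A]_n).
Hypothesis Ha : comatrix D eps a.
Hypothesis Hs : simple_comod a.

Notation sc := (scal_mx A).
Definition Sa := map_mx S a.
Definition W (i j : 'I_n) : 'M[k]_n := \matrix_(r, s) h (a r i * a s j).

Lemma dualE : dual_comatrix S a = Sa^T.
Proof. by apply/matrixP => i j; rewrite !mxE. Qed.

Lemma SaA : Sa *m a = 1%:M.
Proof.
apply/matrixP => i j; rewrite /Sa !mxE.
rewrite (eq_bigr (fun l => S (a i l) * a l j)) => [|l _]; last by rewrite mxE.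
rewrite (antipode_l HH Ha).
by case: (i == j); rewrite ?scale1r ?scale0r.
Qed.

Lemma Inv i j : a *m sc (W i j) *m a^T = sc (W i j).
Proof.
apply/matrixP => m l; rewrite !mxE -(haar_inv HH Hh Ha i j m l).
rewrite exchange_big; apply: eq_bigr => s _; rewrite !mxE mulr_suml.
apply: eq_bigr => r _; rewrite !mxE mulr_algr -scalerAl; done.
Qed.

Lemma h_inalg c : h (c%:A) = c.
Proof. by case: Hh => lh h1 _; rewrite lfZ // h1 mulr1. Qed.

Lemma n_gt0 : (0 < n)%N.
Proof. by case: Hs. Qed.

Lemma unit_neq0 (E : 'M[k]_n) : E \in unitmx -> exists i j, E i j != 0.
Proof.
move=> uE; case: (boolP [exists i, exists j, E i j != 0]).
  by move=> /existsP [i /existsP [j Hij]]; exists i, j.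
move=> /existsPn H0; have E0 : E = 0.
  apply/matrixP => i j; rewrite mxE; apply/eqP.
  by move: (H0 i) => /existsPn /(_ j) /negPn.
move: uE n_gt0; rewrite E0; case: (n) => // n' .
by rewrite unitmxE det0 unitr0.
Qed.

Lemma part2_core (E : 'M[k]_n) : E \in unitmx -> colinear_form a E ->
  \tr (E *m invmx E^T) != 0 /\
  forall i j, W i j = (E i j / \tr (E *m invmx E^T)) *: invmx E.
Proof.
move=> uE cE.
set s := \tr (E *m invmx E^T).
have sE : s = \sum_i \sum_l E i l * invmx E i l.
  rewrite /s /mxtrace; apply: eq_bigr => i _; rewrite mxE.
  by apply: eq_bigr => l _; rewrite -trmx_inv mxE.
have lam : forall i j, exists c, W i j = c *: invmx E.
  move=> i j; set M := W i j *m E.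
  have HM : a *m sc M = sc M *m a.
    rewrite /M scal_mxM -[X in _ *m (_ *m X)]cE !mulmxA Inv //.
  have [c Mc] : exists c, M = c%:M.
    apply: (schur Hs) => f lf.
    by rewrite -map_lin_r // HM map_lin_l.
  exists c; by rewrite -[W i j](mulmxK uE) -/M Mc mul_scalar_mx.
have lh : lin_form h by case: Hh.
have norm : forall i j c, W i j = c *: invmx E -> c * s = E i j.
  move=> i j c Wc.
  have hL : h ((a^T *m sc E *m a) i j) = \sum_l \sum_r E r l * W i j r l.
    rewrite mxE (lf_sum _ _ lh); apply: eq_bigr => l _.
    rewrite mxE mulr_suml (lf_sum _ _ lh); apply: eq_bigr => r _.
    by rewrite !mxE mulr_algr -scalerAl (lfZ lh).
  have cE' : a^T *m sc E *m a = sc E := cE.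
  move: hL; rewrite cE' mxE h_inalg => ->.
  rewrite sE exchange_big mulr_sumr; apply: eq_bigr => r _.
  rewrite mulr_sumr; apply: eq_bigr => l _.
  by rewrite Wc !mxE mulrCA.
have [i0 [j0 E0]] := unit_neq0 uE.
have s0 : s != 0.
  have [c Wc] := lam i0 j0; have := norm _ _ _ Wc.
  by move=> H; apply: contra_neq E0 => s0'; rewrite -H s0' mulr0.
split => // i j; have [c Wc] := lam i j; rewrite Wc -(norm _ _ _ Wc) mulfK //.
Qed.

Lemma nu2W : nu2 h a = \sum_i \sum_j W i j j i.
Proof. by apply: eq_bigr => i _; apply: eq_bigr => j _; rewrite mxE. Qed.

Lemma part2 (E : 'M[k]_n) : E \in unitmx -> colinear_form a E ->
  \tr (E *m invmx E^T) != 0 /\ nu2 h a = n%:R / \tr (E *m invmx E^T).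
Proof.
move=> uE cE; have [s0 HW] := part2_core uE cE; split => //.
rewrite nu2W -mxtrace1 -(mulmxV uE) /mxtrace mulr_suml; apply: eq_bigr => i _.
rewrite mxE mulr_suml; apply: eq_bigr => j _.
by rewrite HW !mxE mulrAC.
Qed.

Lemma nu2_sym (E : 'M[k]_n) c : E \in unitmx -> colinear_form a E ->
  E^T = c *: E -> n%:R != 0 :> k -> nu2 h a = c.
Proof.
move=> uE cE ET n0; have [s0 ->] := part2 uE cE.
have c0 : c != 0.
  apply: contraTneq uE => c0; rewrite -unitmx_tr ET c0 scale0r.
  by move: n_gt0; case: (n) => // n'; rewrite unitmxE det0 unitr0.
rewrite ET invmxZ -?ET ?unitmx_tr // -scalemxAr mxtraceZ mulmxV // mxtrace1.
by rewrite invfM invrK mulrCA mulfV // mulr1.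
Qed.

Lemma part1 : ~ self_dual S a -> nu2 h a = 0.
Proof.
move=> nsd; apply/eqP; apply/negPn/negP => nz; apply: nsd.
have [i [j Wij]] : exists i j, W i j != 0.
  case: (boolP [exists i, exists j, W i j != 0]).
    by move=> /existsP [i /existsP [j Hij]]; exists i, j.
  move=> /existsPn H0; move: nz; rewrite nu2W big1 ?eqxx // => i _.
  rewrite big1 // => j _; move: (H0 i) => /existsPn /(_ j) /negPn /eqP ->.
  by rewrite mxE.
set G := (W i j)^T.
have aG : a *m sc G = sc G *m dual_comatrix S a.
  have h1 : sc (W i j) *m a^T = Sa *m sc (W i j).
    by rewrite -[in RHS](Inv i j) !mulmxA SaA mul1mx.
  by have := congr1 trmx h1; rewrite tr_mulscal_l tr_mulscal_r trmxK dualE.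
have uG : G \in unitmx.
  apply: (@inv_morph _ _ _ _ _ (fun f => map_mx f (dual_comatrix S a)) Hs).
    by rewrite /G; apply: contra Wij => /eqP H; rewrite -[W i j]trmxK H trmx0.
  by move=> f lf; rewrite -map_lin_r // aG map_lin_l.
exists (invmx G); split; first by rewrite unitmx_inv.
have e1 : sc (invmx G) *m sc G = 1%:M by rewrite -scal_mxM mulVmx // scal_mx1.
have e2 : sc G *m sc (invmx G) = 1%:M by rewrite -scal_mxM mulmxV // scal_mx1.
rewrite -[LHS]mul1mx -e1 -mulmxA (mulmxA (sc G)) -aG.
by rewrite !mulmxA -(mulmxA _ (sc G)) e2 mulmx1.
Qed.

Lemma part3 : [pchar k] =i pred0 -> self_dual S a -> (forall x, S (S x) = x) ->
  [/\ nu2 h a = 1 \/ nu2 h a = -1,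
      nu2 h a = 1 <-> (exists E : 'M[k]_n,
         [/\ E \in unitmx, colinear_form a E & E^T = E]) &
      nu2 h a = -1 <-> (exists E : 'M[k]_n,
         [/\ E \in unitmx, colinear_form a E & E^T = - E])].
Proof.
move=> pch [F [uF bF]] S2.
have n0 : n%:R != 0 :> k.
  by rewrite ((pcharf0P k).1 pch n) -lt0n n_gt0.
have lS : lin_endo S by case: HH => _ _ _ _ [].
set E := F^T.
have uE : E \in unitmx by rewrite unitmx_tr.
have eq1 : sc E *m Sa = a^T *m sc E.
  by have := congr1 trmx bF; rewrite tr_mulscal_r tr_mulscal_l dualE trmxK.
have cE : colinear_form a E by rewrite /colinear_form -eq1 -mulmxA SaA mulmx1.
have eq2 : dual_comatrix S a *m sc E = sc E *m a.
  have := congr1 (map_mx S) eq1; rewrite map_endo_l // map_endo_r //.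
  have -> : map_mx S Sa = a by apply/matrixP => i j; rewrite !mxE S2.
  by rewrite -map_trmx -/Sa -dualE.
have bF' : dual_comatrix S a *m sc E^T = sc E^T *m a by rewrite trmxK.
set X := invmx E *m E^T.
have HX : a *m sc X = sc X *m a.
  have aE : a = sc (invmx E) *m dual_comatrix S a *m sc E.
    by rewrite -mulmxA eq2 mulmxA -scal_mxM mulVmx // scal_mx1 mul1mx.
  rewrite {1}aE /X !scal_mxM !mulmxA -(mulmxA _ (sc E)) -scal_mxM mulmxV //.
  by rewrite scal_mx1 mulmx1 -!mulmxA bF'.
have [c Xc] : exists c, X = c%:M.
  by apply: (schur Hs) => f lf; rewrite -map_lin_r // HX map_lin_l.
have ETc : E^T = c *: E.
  by rewrite -(mulKVmx uE E^T) -/X Xc mul_mx_scalar.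
have c2 : c = 1 \/ c = -1.
  have [i [j Eij]] := unit_neq0 uE.
  have e1 : E j i = c * E i j.
    by have := congr1 (fun M : 'M[k]_n => M i j) ETc; rewrite !mxE.
  have e2 : E i j = c * E j i.
    by have := congr1 (fun M : 'M[k]_n => M j i) ETc; rewrite !mxE.
  have cc : c * c = 1.
    have : (c * c - 1) * E i j == 0.
      by rewrite mulrBl mul1r -mulrA -e1 -e2 subrr.
    by rewrite mulf_eq0 (negPf Eij) orbF subr_eq0 => /eqP.
  have : (c - 1) * (c + 1) == 0.
    by rewrite mulrDr mulr1 !mulrBl mul1r cc addrA subrK subrr.
  by rewrite mulf_eq0 subr_eq0 addr_eq0 => /orP [/eqP->|/eqP->]; [left|right].
have nu2c : nu2 h a = c by apply: (nu2_sym uE cE ETc n0).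
have m11 : (1 : k) != -1.
  by apply/eqP => /eqP; rewrite -addr_eq0 -(natrD k 1 1) ((pcharf0P k).1 pch).
split.
- by rewrite nu2c.
- split=> [nu1|[E' [uE' cE' ET']]].
    exists E; split => //; rewrite ETc -nu2c nu1 scale1r //.
  by apply: (nu2_sym uE' cE' _ n0); rewrite ET' scale1r.
- split=> [nu1|[E' [uE' cE' ET']]].
    exists E; split => //; rewrite ETc -nu2c nu1 scaleN1r //.
  by apply: (nu2_sym uE' cE' _ n0); rewrite ET' scaleN1r.
Qed.
End Main.

Theorem theorem6 (k : closedFieldType) (A : algType k)
    (D : A -> seq (A * A)) (eps : A -> k) (S : A -> A) (h : A -> k) :
  [pchar k] =i pred0 ->
  is_hopf D eps S -> cosemisimple D eps -> haar D h ->
  forall (n : nat) (a : 'M[A]_n), comatrix D eps a -> simple_comod a ->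
  [/\ (~ self_dual S a -> nu2 h a = 0),
      (self_dual S a -> forall E : 'M[k]_n, E \in unitmx -> colinear_form a E ->
         \tr (E *m invmx E^T) != 0 /\ nu2 h a = n%:R / \tr (E *m invmx E^T)) &
      (self_dual S a -> (forall x, S (S x) = x) ->
         [/\ nu2 h a = 1 \/ nu2 h a = -1,
             nu2 h a = 1 <-> (exists E : 'M[k]_n,
                [/\ E \in unitmx, colinear_form a E & E^T = E]) &
             nu2 h a = -1 <-> (exists E : 'M[k]_n,
                [/\ E \in unitmx, colinear_form a E & E^T = - E])])].
Proof.
move=> pch HH _ Hh n a Ha Hs; split.
- exact: (part1 HH Hh Ha Hs).
- by move=> _ E uE cE; exact: (part2 HH Hh Ha Hs uE cE).
- by move=> sd S2; exact: (part3 HH Hh Ha Hs pch sd S2).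
Qed.
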